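(* Let $n\ge 2$ and let $\gamma:I\to\mathbb{R}^2$ ($0\in I$) be a front without inflection points. If $\gamma$ is $\mathcal{A}$-equivalent at $t=0$ to $Cusp_{(n,n+1)}(t)=(t^n,t^{n+1})$, then $t=0$ is a singular point of $Ev^{k}(\gamma)$ for every $k=1,\dots,n-2$ and a regular point of $Ev^{n-1}(\gamma)$.
   Context: A $C^\infty$ curve $\gamma:I\to\mathbb{R}^2$ is a front if there is a $C^\infty$ map $\nu:I\to S^1$ with $\gamma'(t)\cdot\nu(t)=0$ for all $t$ and $(\gamma,\nu):I\to\mathbb{R}^2\times S^1$ an immersion (a Legendre immersion). A point $t$ is singular for a curve $c$ if $c'(t)=\mathbf{0}$, regular otherwise. Let $M$ denote anticlockwise rotation by $\pi/2$, $\mu=M(\nu)$, $\ell(t)=\nu'(t)\cdot\mu(t)$ and $\beta(t)=\gamma'(t)\cdot\mu(t)$. The front has no inflection points if $\ell(t)\neq0$ for all $t\in I$. The evolute is $Ev(\gamma)(t)=\gamma(t)-\frac{\beta(t)}{\ell(t)}\nu(t)$; $(Ev(\gamma),\mu)$ is again a Legendre immersion without inflection points, with curvature $(\ell,\frac{d}{dt}(\beta/\ell))$. Iteratively, with $\beta_0=\beta$, $\beta_k=\frac{d}{dt}(\beta_{k-1}/\ell)$, $Ev^0(\gamma)=\gamma$ and $Ev^{k}(\gamma)=Ev^{k-1}(\gamma)-\frac{\beta_{k-1}}{\ell}M^{k-1}(\nu)$, where $(Ev^k(\gamma),M^k(\nu))$ is a Legendre immersion with curvature $(\ell,\beta_k)$.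 $\mathcal{A}$-equivalence means equivalence via $C^\infty$ diffeomorphism germs of source and target. *)

(* Defs.v *)
From Stdlib Require Import Reals.
From Coquelicot Require Import Coquelicot.
Open Scope R_scope.

Definition smooth_on (U : R -> Prop) (f : R -> R) : Prop :=
  forall (n : nat) (x : R), U x -> ex_derive (Derive_n f n) x.

Definition d1 (f : R * R -> R) : R * R -> R :=
  fun p => Derive (fun s => f (s, snd p)) (fst p).
Definition d2 (f : R * R -> R) : R * R -> R :=
  fun p => Derive (fun s => f (fst p, s)) (snd p).

Fixpoint Ck2 (k : nat) (f : R * R -> R) (U : R * R -> Prop) : Prop :=
  match k with
  | O => forall p, U p -> continuous f p
  | S k' => (forall p, U p -> continuous f p) /\
            (forall p, U p -> ex_derive (fun s => f (s, snd p)) (fst p)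
                              /\ ex_derive (fun s => f (fst p, s)) (snd p)) /\
            Ck2 k' (d1 f) U /\ Ck2 k' (d2 f) U
  end.

Definition smooth2_on (U : R * R -> Prop) (f : R * R -> R) : Prop :=
  forall k, Ck2 k f U.

Definition smooth22_on (U : R * R -> Prop) (F : R * R -> R * R) : Prop :=
  smooth2_on U (fun p => fst (F p)) /\ smooth2_on U (fun p => snd (F p)).

Definition ival (a b : R) : R -> Prop := fun t => a < t < b.
Definition sq (p : R * R) (d : R) : R * R -> Prop :=
  fun q => Rabs (fst q - fst p) < d /\ Rabs (snd q - snd p) < d.

Definition dot (u v : R * R) : R := fst u * fst v + snd u * snd v.
Definition Mrot (v : R * R) : R * R := (- snd v, fst v).
Fixpoint Mpow (k : nat) (v : R * R) : R * R :=
  match k with O => v | S k' => Mrot (Mpow k' v) end.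

Definition dcurve (c : R -> R * R) (t : R) : R * R :=
  (Derive (fun s => fst (c s)) t, Derive (fun s => snd (c s)) t).

Definition singular_point (c : R -> R * R) (t : R) : Prop :=
  dcurve c t = (0, 0).
Definition regular_point (c : R -> R * R) (t : R) : Prop :=
  dcurve c t <> (0, 0).

Definition legendre_immersion (a b : R) (gamma nu : R -> R * R) : Prop :=
  smooth_on (ival a b) (fun t => fst (gamma t)) /\
  smooth_on (ival a b) (fun t => snd (gamma t)) /\
  smooth_on (ival a b) (fun t => fst (nu t)) /\
  smooth_on (ival a b) (fun t => snd (nu t)) /\
  (forall t, ival a b t -> dot (nu t) (nu t) = 1) /\
  (forall t, ival a b t -> dot (dcurve gamma t) (nu t) = 0) /\
  (forall t, ival a b t -> (dcurve gamma t, dcurve nu t) <> ((0, 0), (0, 0))).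

Definition mu_of (nu : R -> R * R) : R -> R * R := fun t => Mrot (nu t).
Definition ell (nu : R -> R * R) : R -> R :=
  fun t => dot (dcurve nu t) (mu_of nu t).
Definition beta0 (gamma nu : R -> R * R) : R -> R :=
  fun t => dot (dcurve gamma t) (mu_of nu t).

Fixpoint betak (gamma nu : R -> R * R) (k : nat) : R -> R :=
  match k with
  | O => beta0 gamma nu
  | S k' => fun t => Derive (fun s => betak gamma nu k' s / ell nu s) t
  end.

Fixpoint Ev (gamma nu : R -> R * R) (k : nat) : R -> R * R :=
  match k with
  | O => gamma
  | S k' => fun t =>
      let c := betak gamma nu k' t / ell nu t in
      let v := Mpow k' (nu t) in
      (fst (Ev gamma nu k' t) - c * fst v, snd (Ev gamma nu k' t) - c * snd v)
  end.

Definition Cusp (n : nat) (t : R) : R * R := (t ^ n, t ^ (S n)).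

(* The germ of gamma at 0 (defined on I = (a,b)) is A-equivalent to the
   germ of g at 0 : there are diffeomorphism germs phi : (R,0) -> (R,0)
   and psi : (R^2, gamma 0) -> (R^2, g 0) with psi o gamma = g o phi
   near 0.  A diffeomorphism germ is represented by a map smooth near the
   base point having a smooth two-sided local inverse. *)
Definition A_equivalent_at0 (a b : R) (gamma g : R -> R * R) : Prop :=
  exists (d : R) (phi phiinv : R -> R) (psi chi : R * R -> R * R),
    0 < d /\
    phi 0 = 0 /\
    smooth_on (ival (- d) d) phi /\ smooth_on (ival (- d) d) phiinv /\
    (forall t, ival (- d) d t -> phiinv (phi t) = t) /\
    (forall s, ival (- d) d s -> phi (phiinv s) = s) /\
    psi (gamma 0) = g 0 /\
    smooth22_on (sq (gamma 0) d) psi /\ smooth22_on (sq (g 0) d) chi /\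
    (forall x, sq (gamma 0) d x -> chi (psi x) = x) /\
    (forall y, sq (g 0) d y -> psi (chi y) = y) /\
    (forall t, ival a b t -> ival (- d) d t -> psi (gamma t) = g (phi t)).

(* Main.v *)
Require Import Defs.
From Stdlib Require Import Reals Lra Lia Factorial.
From Coquelicot Require Import Coquelicot.
Open Scope R_scope.

Definition openU (U : R -> Prop) := forall x, U x -> locally x U.

Lemma ival_open a b : openU (ival a b).
Proof.
  intros x [H1 H2].
  assert (Hp: 0 < Rmin (x - a) (b - x)) by (apply Rmin_pos; lra).
  exists (mkposreal _ Hp). intros y Hy.
  change (Rabs (y - x) < Rmin (x - a) (b - x)) in Hy.
  apply Rabs_def2 in Hy. destruct Hy as [Hy1 Hy2].
  generalize (Rmin_l (x-a) (b-x)) (Rmin_r (x-a) (b-x)). unfold ival. lra.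
Qed.

Lemma exR_plus (f g : R -> R) x : ex_derive f x -> ex_derive g x -> ex_derive (fun y => f y + g y) x.
Proof. intros; apply (@ex_derive_plus R_AbsRing R_NormedModule f g x); auto. Qed.
Lemma exR_mult (f g : R -> R) x : ex_derive f x -> ex_derive g x -> ex_derive (fun y => f y * g y) x.
Proof. intros; apply (ex_derive_mult f g x); auto. Qed.

Definition Cn (U : R -> Prop) (n : nat) (f : R -> R) :=
  forall m, (m <= n)%nat -> forall x, U x -> ex_derive (Derive_n f m) x.

Lemma Derive_n_Derive f m x : Derive_n (Derive f) m x = Derive_n f (S m) x.
Proof.
  revert x; induction m; intros x; simpl. reflexivity.
  apply Derive_ext. intros; apply IHm.
Qed.

Lemma Cn_ext U n f g : openU U -> (forall x, U x -> f x = g x) -> Cn U n f -> Cn U n g.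
Proof.
  intros HU Hfg H m Hm x Hx.
  apply ex_derive_ext_loc with (Derive_n f m).
  - generalize (HU x Hx). apply filter_imp. intros y Hy.
    apply Derive_n_ext_loc. generalize (HU y Hy). apply filter_imp. auto.
  - now apply H.
Qed.

Lemma Cn_S U n f : Cn U (S n) f <-> ((forall x, U x -> ex_derive f x) /\ Cn U n (Derive f)).
Proof.
  split.
  - intros H. split. intros x Hx. apply (H 0%nat); [lia|auto].
    intros m Hm x Hx. apply ex_derive_ext with (Derive_n f (S m)).
    intros; symmetry; apply Derive_n_Derive. apply H; [lia|auto].
  - intros [H1 H2] m Hm x Hx. destruct m. apply H1; auto.
    apply ex_derive_ext with (Derive_n (Derive f) m). intros; apply Derive_n_Derive.
    apply H2; [lia|auto].
Qed.

Lemma Cn_weak U n f : Cn U (S n) f -> Cn U n f.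
Proof. intros H m Hm. apply H; lia. Qed.

Lemma Cn_0 U f : Cn U 0 f <-> (forall x, U x -> ex_derive f x).
Proof.
  split. intros H x Hx. apply (H 0%nat); auto.
  intros H m Hm x Hx. assert (m = 0%nat) by lia; subst. apply H; auto.
Qed.

Lemma Cn_plus U (HU: openU U) n : forall f g, Cn U n f -> Cn U n g -> Cn U n (fun x => f x + g x).
Proof.
  induction n; intros f g Hf Hg.
  - apply (proj2 (Cn_0 _ _)). intros x Hx; apply exR_plus; [apply (Hf 0%nat)|apply (Hg 0%nat)]; auto.
  - apply Cn_S in Hf as [Hf1 Hf2]; apply Cn_S in Hg as [Hg1 Hg2]. apply Cn_S. split.
    intros; apply exR_plus; auto.
    apply Cn_ext with (fun x => Derive f x + Derive g x); auto.
    intros x Hx. symmetry. apply Derive_plus; auto.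
Qed.

Lemma Cn_mult U (HU: openU U) n : forall f g, Cn U n f -> Cn U n g -> Cn U n (fun x => f x * g x).
Proof.
  induction n; intros f g Hf Hg.
  - apply (proj2 (Cn_0 _ _)). intros x Hx; apply exR_mult; [apply (Hf 0%nat)|apply (Hg 0%nat)]; auto.
  - pose proof (Cn_weak _ _ _ Hf) as Hf'. pose proof (Cn_weak _ _ _ Hg) as Hg'.
    apply Cn_S in Hf as [Hf1 Hf2]; apply Cn_S in Hg as [Hg1 Hg2]. apply Cn_S. split.
    intros; apply exR_mult; auto.
    apply Cn_ext with (fun x => Derive f x * g x + f x * Derive g x); auto.
    intros x Hx. symmetry. apply Derive_mult; auto.
    apply Cn_plus; auto.
Qed.

Lemma Cn_const U (HU: openU U) n c : Cn U n (fun _ => c).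
Proof.
  intros m Hm x Hx. destruct m. apply ex_derive_const.
  apply ex_derive_ext with (fun _ => 0). intros; symmetry; apply Derive_n_const.
  apply ex_derive_const.
Qed.

Lemma Cn_inv U (HU: openU U) n : forall f, (forall x, U x -> f x <> 0) -> Cn U n f -> Cn U n (fun x => / f x).
Proof.
  intros f Hnz. induction n; intros Hf.
  - apply (proj2 (Cn_0 _ _)). intros x Hx; apply ex_derive_inv; [apply (Hf 0%nat)|]; auto.
  - pose proof (Cn_weak _ _ _ Hf) as Hf'.
    apply Cn_S in Hf as [Hf1 Hf2]. apply Cn_S. split.
    intros; apply ex_derive_inv; auto.
    apply Cn_ext with (fun x => ((fun _ => -1) x * Derive f x) * (/ f x * / f x)); auto.
    intros x Hx. rewrite Derive_inv; auto. simpl. field. auto.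
    apply Cn_mult; auto. apply Cn_mult; auto. apply Cn_const; auto.
    apply Cn_mult; auto.
Qed.

Lemma sm_Cn U f : smooth_on U f <-> forall n, Cn U n f.
Proof.
  split. intros H n m Hm x Hx. apply H; auto.
  intros H n x Hx. apply (H n n); auto.
Qed.

Lemma sm_ext U f g : openU U -> (forall x, U x -> f x = g x) -> smooth_on U f -> smooth_on U g.
Proof. intros HU H Hf. apply sm_Cn. intros n; apply Cn_ext with f; auto. apply sm_Cn; auto. Qed.
Lemma sm_plus U f g : openU U -> smooth_on U f -> smooth_on U g -> smooth_on U (fun x => f x + g x).
Proof. intros HU Hf Hg. apply sm_Cn. intros n; apply Cn_plus; auto; apply sm_Cn; auto. Qed.
Lemma sm_mult U f g : openU U -> smooth_on U f -> smooth_on U g -> smooth_on U (fun x => f x * g x).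
Proof. intros HU Hf Hg. apply sm_Cn. intros n; apply Cn_mult; auto; apply sm_Cn; auto. Qed.
Lemma sm_inv U f : openU U -> (forall x, U x -> f x <> 0) -> smooth_on U f -> smooth_on U (fun x => / f x).
Proof. intros HU Hnz Hf. apply sm_Cn. intros n; apply Cn_inv; auto; apply sm_Cn; auto. Qed.
Lemma sm_const U c : openU U -> smooth_on U (fun _ => c).
Proof. intros HU. apply sm_Cn. intros n; apply Cn_const; auto. Qed.
Lemma sm_derive U f : smooth_on U f -> smooth_on U (Derive f).
Proof. intros Hf. apply sm_Cn. intros n. apply sm_Cn with (n := S n) in Hf. apply Cn_S in Hf. tauto. Qed.
Lemma sm_ex_derive U f x : smooth_on U f -> U x -> ex_derive f x.
Proof. intros H Hx. apply (H 0%nat x Hx). Qed.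
Lemma sm_opp U f : openU U -> smooth_on U f -> smooth_on U (fun x => - f x).
Proof. intros HU Hf. apply sm_ext with (fun x => (fun _ => -1) x * f x); auto.
  intros; ring. apply sm_mult; auto. apply sm_const; auto. Qed.
Lemma sm_cont U f x : smooth_on U f -> U x -> continuity_pt f x.
Proof. intros H Hx. apply continuity_pt_filterlim. apply (@ex_derive_continuous R_AbsRing R_NormedModule). apply (H 0%nat x Hx). Qed.

Lemma lim0_intro (f : R -> R) (l : R) : (forall eps, 0 < eps -> exists delta, 0 < delta /\ forall t, t <> 0 -> Rabs t < delta -> Rabs (f t - l) < eps) -> is_lim f 0 l.
Proof.
  intros H. apply is_lim_spec. intros eps. destruct (H eps (cond_pos eps)) as [d [Hd H']].
  exists (mkposreal d Hd). intros y Hy Hy0. apply H'. auto.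
  change (Rabs (y - 0) < d) in Hy. rewrite Rminus_0_r in Hy. auto.
Qed.

Lemma lim0_elim (f : R -> R) (l : R) : is_lim f 0 l -> forall eps, 0 < eps -> exists delta, 0 < delta /\ forall t, t <> 0 -> Rabs t < delta -> Rabs (f t - l) < eps.
Proof.
  intros H eps Heps. apply is_lim_spec in H. destruct (H (mkposreal eps Heps)) as [d Hd].
  exists d. split. apply cond_pos. intros t Ht0 Ht. apply Hd; auto.
  change (Rabs (t - 0) < d). rewrite Rminus_0_r. auto.
Qed.

Lemma ival_small a b t : a < 0 < b -> Rabs t < Rmin (-a) b -> ival a b t.
Proof.
  intros Hab H. generalize (Rmin_l (-a) b) (Rmin_r (-a) b). intros.
  apply Rabs_def2 in H. unfold ival; lra.
Qed.

Lemma isd_eq (f : R -> R) (x l l' : R) : is_derive f x l -> l = l' -> is_derive f x l'.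
Proof. intros H <-; exact H. Qed.

Lemma isd_pow (m : nat) x : is_derive (fun s => s ^ m) x (INR m * x ^ pred m).
Proof.
  eapply isd_eq. apply (is_derive_pow (fun s => s) m x 1 (is_derive_id x)). simpl. ring.
Qed.

Lemma isdR_plus (f g : R -> R) x df dg : is_derive f x df -> is_derive g x dg -> is_derive (fun y => f y + g y) x (df + dg).
Proof. intros; apply (@is_derive_plus R_AbsRing R_NormedModule); auto. Qed.
Lemma isdR_minus (f g : R -> R) x df dg : is_derive f x df -> is_derive g x dg -> is_derive (fun y => f y - g y) x (df - dg).
Proof. intros; apply (@is_derive_minus R_AbsRing R_NormedModule); auto. Qed.
Lemma isdR_mult (f g : R -> R) x df dg : is_derive f x df -> is_derive g x dg -> is_derive (fun y => f y * g y) x (df * g x + f x * dg).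
Proof. intros; apply (@is_derive_mult R_AbsRing); auto. intros; apply Rmult_comm. Qed.
Lemma isdR_opp (f : R -> R) x df : is_derive f x df -> is_derive (fun y => - f y) x (- df).
Proof. intros; apply (@is_derive_opp R_AbsRing R_NormedModule); auto. Qed.

Lemma T2 a b (Hab : a < 0 < b) (m : nat) : forall f, smooth_on (ival a b) f ->
  (forall j, (j < m)%nat -> Derive_n f j 0 = 0) ->
  is_lim (fun t => f t / t ^ m) 0 (Derive_n f m 0 / INR (fact m)).
Proof.
  assert (HU : openU (ival a b)) by apply ival_open.
  induction m; intros f Hf Hz.
  - simpl. eapply is_lim_ext. intros t. symmetry. apply Rdiv_1_r.
    replace (f 0 / 1) with (f 0) by field.
    apply is_lim_continuity. apply sm_cont with (ival a b); auto.
  - set (L := Derive_n f (S m) 0 / INR (fact m)).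
    assert (IH : is_lim (fun t => Derive f t / t ^ m) 0 L).
    { unfold L. rewrite <- Derive_n_Derive. apply IHm. apply sm_derive; auto.
      intros j Hj. rewrite Derive_n_Derive. apply Hz. lia. }
    assert (Hf0 : f 0 = 0) by (apply (Hz 0%nat); lia).
    assert (Hd0 : Derive f 0 - L * 0 ^ m = 0).
    { destruct m. unfold L. rewrite <- (Derive_n_Derive f 0 0). change (Derive_n (Derive f) 0 0) with (Derive f 0). change (INR (fact 0)) with 1. change (0^0) with 1. field.
      simpl. rewrite Rmult_0_l, Rmult_0_r, Rminus_0_r. apply (Hz 1%nat). lia. }
    replace (Derive_n f (S m) 0 / INR (fact (S m))) with (L / INR (S m)).
    2:{ unfold L. rewrite fact_simpl, mult_INR. field. split. apply INR_fact_neq_0. apply not_0_INR. lia. }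
    apply lim0_intro. intros eps Heps.
    destruct (lim0_elim _ _ IH (eps/2)) as [d1 [Hd1 H1]]. lra.
    assert (Hd2 : 0 < Rmin (-a) b) by (apply Rmin_pos; lra).
    exists (Rmin d1 (Rmin (-a) b)). split. apply Rmin_pos; lra.
    intros t Ht0 Ht.
    assert (Htd1 : Rabs t < d1) by (generalize (Rmin_l d1 (Rmin (-a) b)); lra).
    assert (Htd2 : Rabs t < Rmin (-a) b) by (generalize (Rmin_r d1 (Rmin (-a) b)); lra).
    set (g := fun s => f s - L / INR (S m) * s ^ (S m)).
    assert (HSm : INR (S m) <> 0) by (apply not_0_INR; lia).
    assert (Hin : forall x, Rmin 0 t <= x <= Rmax 0 t -> Rabs x <= Rabs t).
    { intros x Hx. unfold Rmin, Rmax in Hx. destruct (Rle_dec 0 t).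
      rewrite !Rabs_right; lra. rewrite !Rabs_left1; lra. }
    assert (Hdg : forall x, Rabs x < Rmin (-a) b -> is_derive g x (Derive f x - L * x ^ m)).
    { intros x Hx. unfold g. eapply isd_eq. apply isdR_minus.
      apply Derive_correct. apply sm_ex_derive with (ival a b); auto. apply ival_small; auto.
      apply (is_derive_scal (fun s => s ^ (S m))). apply isd_pow.
      simpl pred. field. auto. }
    destruct (MVT_gen g 0 t (fun x => Derive f x - L * x ^ m)) as [c [Hc Hmvt]].
    { intros x Hx. apply Hdg. assert (Rabs x <= Rabs t) by (apply Hin; lra). lra. }
    { intros x Hx. apply continuity_pt_filterlim.
      apply (@ex_derive_continuous R_AbsRing R_NormedModule).
      eexists. apply Hdg. assert (Rabs x <= Rabs t) by (apply Hin; lra). lra. }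
    assert (Hg0 : g 0 = 0). { unfold g. rewrite Hf0. simpl. field. auto. }
    rewrite Hg0, Rminus_0_r, Rminus_0_r in Hmvt.
    assert (Hct : Rabs c <= Rabs t) by (apply Hin; auto).
    assert (Hbound : Rabs (Derive f c - L * c ^ m) <= eps / 2 * Rabs t ^ m).
    { destruct (Req_dec c 0) as [Hc0|Hc0].
      - subst c. rewrite Hd0, Rabs_R0. apply Rmult_le_pos. lra. apply pow_le, Rabs_pos.
      - assert (Hcm : c ^ m <> 0) by (apply pow_nonzero; auto).
        replace (Derive f c - L * c ^ m) with (c ^ m * (Derive f c / c ^ m - L)) by (field; auto).
        rewrite Rabs_mult, <- RPow_abs, Rmult_comm.
        apply Rmult_le_compat. apply Rabs_pos. apply pow_le, Rabs_pos.
        apply Rlt_le, H1; auto. lra. apply pow_incr. split; auto. apply Rabs_pos. }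
    assert (Htm : t ^ S m <> 0) by (apply pow_nonzero; auto).
    replace (f t / t ^ S m - L / INR (S m)) with (g t / t ^ S m) by (unfold g; field; auto).
    assert (Htm' : t ^ m <> 0) by (apply pow_nonzero; auto).
    replace (g t / t ^ S m) with ((Derive f c - L * c ^ m) / t ^ m)
      by (rewrite Hmvt; simpl; field; auto).
    unfold Rdiv. rewrite Rabs_mult, Rabs_inv, <- RPow_abs.
    assert (0 < Rabs t ^ m) by (apply pow_lt, Rabs_pos_lt; auto).
    apply Rle_lt_trans with (eps / 2 * Rabs t ^ m * / Rabs t ^ m).
    apply Rmult_le_compat_r. apply Rlt_le, Rinv_0_lt_compat; auto. auto.
    field_simplify; lra.
Qed.

Lemma limR_mult (f g : R -> R) (x a b : R) : is_lim f x a -> is_lim g x b -> is_lim (fun t => f t * g t) x (a * b).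
Proof. intros H1 H2. apply (is_lim_mult f g x a b H1 H2). exact I. Qed.
Lemma limR_plus (f g : R -> R) (x a b : R) : is_lim f x a -> is_lim g x b -> is_lim (fun t => f t + g t) x (a + b).
Proof. intros H1 H2. eapply is_lim_plus; eauto. reflexivity. Qed.
Lemma limR_inv (f : R -> R) (x a : R) : is_lim f x a -> a <> 0 -> is_lim (fun t => / f t) x (/ a).
Proof. intros H1 H2. apply (is_lim_inv f x a H1). intros E; apply H2; injection E; auto. Qed.
Lemma limR_unique (f : R -> R) (x a b : R) : is_lim f x a -> is_lim f x b -> a = b.
Proof. intros H1 H2. apply is_lim_unique in H1, H2. rewrite H1 in H2. injection H2; auto. Qed.
Lemma limR_const (x a : R) : is_lim (fun _ => a) x a.
Proof. apply is_lim_const. Qed.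
Lemma lim_ext0 (f g : R -> R) (l : R) d : 0 < d -> (forall t, t <> 0 -> Rabs t < d -> f t = g t) -> is_lim f 0 l -> is_lim g 0 l.
Proof.
  intros Hd H Hf. apply is_lim_ext_loc with f; auto.
  exists (mkposreal d Hd). intros y Hy Hy0. apply H; auto.
  change (Rabs (y - 0) < d) in Hy. rewrite Rminus_0_r in Hy. auto.
Qed.
Lemma lim_cont (f : R -> R) x : continuity_pt f x -> is_lim f x (f x).
Proof. apply is_lim_continuity. Qed.
Lemma lim_pow (k : nat) : is_lim (fun t => t ^ k) 0 (0 ^ k).
Proof.
  apply (lim_cont (fun t => t ^ k)). apply continuity_pt_filterlim.
  apply (@ex_derive_continuous R_AbsRing R_NormedModule). eexists; apply isd_pow.
Qed.

Lemma T1 a b (Hab : a < 0 < b) (m : nat) (c : R) f : smooth_on (ival a b) f ->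
  is_lim (fun t => f t / t ^ m) 0 c ->
  (forall j, (j < m)%nat -> Derive_n f j 0 = 0) /\ Derive_n f m 0 = c * INR (fact m).
Proof.
  intros Hf Hl.
  assert (H : forall j, (j <= m)%nat -> forall i, (i < j)%nat -> Derive_n f i 0 = 0).
  { induction j; intros Hj i Hi. lia.
    destruct (Nat.eq_dec i j) as [->|Hne]; [|apply IHj; lia].
    pose proof (T2 a b Hab j f Hf (IHj ltac:(lia))) as P.
    assert (Q : is_lim (fun t => f t / t ^ j) 0 0).
    { apply (lim_ext0 (fun t => t ^ (m - j) * (f t / t ^ m)) _ 0 1). lra.
      intros t Ht _. replace m with ((m - j) + j)%nat at 2 by lia. rewrite pow_add.
      field. split; apply pow_nonzero; auto.
      replace 0 with (0 ^ (m - j) * c) at 2.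
      apply limR_mult; auto. apply lim_pow. replace (m - j)%nat with (S (m - j - 1)) by lia.
      simpl; ring. }
    generalize (limR_unique _ _ _ _ P Q). intros E.
    assert (INR (fact j) <> 0) by apply INR_fact_neq_0.
    apply Rmult_eq_reg_r with (/ INR (fact j)). rewrite Rmult_0_l. exact E.
    apply Rinv_neq_0_compat; auto. }
  split. intros j Hj; apply (H m); auto.
  pose proof (T2 a b Hab m f Hf (H m (le_n m))) as P.
  generalize (limR_unique _ _ _ _ P Hl). intros E. rewrite <- E. field. apply INR_fact_neq_0.
Qed.

Lemma step a b (Hab : a < 0 < b) (p : nat) (c : R) (bk l : R -> R) :
  smooth_on (ival a b) bk -> smooth_on (ival a b) l -> (forall x, ival a b x -> l x <> 0) ->
  c <> 0 -> is_lim (fun t => bk t / t ^ (S p)) 0 c ->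
  smooth_on (ival a b) (Derive (fun s => bk s / l s)) /\
  exists c', c' <> 0 /\ is_lim (fun t => Derive (fun s => bk s / l s) t / t ^ p) 0 c'.
Proof.
  intros Hb Hl Hl0 Hc Hlim.
  assert (HU : openU (ival a b)) by apply ival_open.
  set (g := fun s => bk s / l s).
  assert (Hg : smooth_on (ival a b) g).
  { apply sm_ext with (fun s => bk s * (fun s => / l s) s); auto.
    apply sm_mult; auto. apply sm_inv; auto. }
  assert (H0 : ival a b 0) by (unfold ival; lra).
  assert (Hgl : is_lim (fun t => g t / t ^ (S p)) 0 (c * / l 0)).
  { apply (is_lim_ext (fun t => bk t / t ^ (S p) * / l t)). intros t. unfold g, Rdiv. ring.
    apply limR_mult; auto. apply limR_inv; auto. apply lim_cont. apply sm_cont with (ival a b); auto. }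
  destruct (T1 a b Hab (S p) _ g Hg Hgl) as [Hz Hm].
  split. apply sm_derive; auto.
  exists (Derive_n (Derive g) p 0 / INR (fact p)). split.
  - rewrite Derive_n_Derive, Hm. rewrite fact_simpl, mult_INR.
    assert (INR (fact p) <> 0) by apply INR_fact_neq_0.
    assert (INR (S p) <> 0) by (apply not_0_INR; lia).
    assert (l 0 <> 0) by auto.
    replace (c * / l 0 * (INR (S p) * INR (fact p)) / INR (fact p)) with (c * / l 0 * INR (S p)) by (field; auto).
    apply Rmult_integral_contrapositive_currified; auto.
    apply Rmult_integral_contrapositive_currified; auto. apply Rinv_neq_0_compat; auto.
  - apply (T2 a b); auto. apply sm_derive; auto. intros j Hj. rewrite Derive_n_Derive. apply Hz. lia.
Qed.

Lemma alg1 p q x y : x*x+y*y = 1 -> x*p+y*q = 0 -> p = (p*-y + q*x)*-y /\ q = (p*-y+q*x)*x.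
Proof.
  intros H1 H2. split; apply Rminus_diag_uniq.
  - replace (p - (p*-y + q*x)*-y) with (p * (1 - (x*x+y*y)) + x * (x*p+y*q)) by ring.
    rewrite H1, H2; ring.
  - replace (q - (p*-y + q*x)*x) with (q * (1 - (x*x+y*y)) + y * (x*p+y*q)) by ring.
    rewrite H1, H2; ring.
Qed.

Section E.
Variables (a b : R) (gamma nu : R -> R * R).
Hypothesis HL : legendre_immersion a b gamma nu.
Hypothesis Hell : forall t, ival a b t -> ell nu t <> 0.

Let U := ival a b.
Let HU : openU U := ival_open a b.

Lemma ell_eq t : ell nu t = Derive (fun s => fst (nu s)) t * - snd (nu t) + Derive (fun s => snd (nu s)) t * fst (nu t).
Proof. reflexivity. Qed.
Lemma beta0_eq t : beta0 gamma nu t = Derive (fun s => fst (gamma s)) t * - snd (nu t) + Derive (fun s => snd (gamma s)) t * fst (nu t).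
Proof. reflexivity. Qed.

Lemma sm_ell : smooth_on U (ell nu).
Proof.
  destruct HL as [Hg1 [Hg2 [Hn1 [Hn2 _]]]].
  apply sm_ext with (fun t => Derive (fun s => fst (nu s)) t * (fun t => - snd (nu t)) t + Derive (fun s => snd (nu s)) t * fst (nu t)).
  exact HU. intros; reflexivity.
  apply sm_plus. exact HU. apply sm_mult. exact HU. apply sm_derive; exact Hn1. apply sm_opp. exact HU. exact Hn2.
  apply sm_mult. exact HU. apply sm_derive; exact Hn2. exact Hn1.
Qed.

Lemma sm_betak k : smooth_on U (betak gamma nu k).
Proof.
  destruct HL as [Hg1 [Hg2 [Hn1 [Hn2 _]]]].
  induction k.
  - apply sm_ext with (fun t => Derive (fun s => fst (gamma s)) t * (fun t => - snd (nu t)) t + Derive (fun s => snd (gamma s)) t * fst (nu t)).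
    exact HU. intros; reflexivity.
    apply sm_plus. exact HU. apply sm_mult. exact HU. apply sm_derive; exact Hg1. apply sm_opp. exact HU. exact Hn2.
    apply sm_mult. exact HU. apply sm_derive; exact Hg2. exact Hn1.
  - apply sm_ext with (Derive (fun s => betak gamma nu k s / ell nu s)). exact HU. intros; reflexivity.
    apply sm_derive. apply sm_ext with (fun s => betak gamma nu k s * (fun s => / ell nu s) s). exact HU. intros; reflexivity.
    apply sm_mult. exact HU. exact IHk. apply sm_inv. exact HU. exact Hell. apply sm_ell.
Qed.

Lemma nu_deriv t : U t -> Derive (fun s => fst (nu s)) t = ell nu t * - snd (nu t) /\
                          Derive (fun s => snd (nu s)) t = ell nu t * fst (nu t).
Proof.
  intros Ht. destruct HL as [Hg1 [Hg2 [Hn1 [Hn2 [Hunit _]]]]].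
  set (n1 := fun s => fst (nu s)). set (n2 := fun s => snd (nu s)).
  assert (D1 : is_derive n1 t (Derive n1 t)) by (apply Derive_correct; apply sm_ex_derive with U; [exact Hn1|exact Ht]).
  assert (D2 : is_derive n2 t (Derive n2 t)) by (apply Derive_correct; apply sm_ex_derive with U; [exact Hn2|exact Ht]).
  assert (E : 2 * (n1 t * Derive n1 t + n2 t * Derive n2 t) = 0).
  { assert (P : is_derive (fun s => n1 s * n1 s + n2 s * n2 s) t (2 * (n1 t * Derive n1 t + n2 t * Derive n2 t))).
    { eapply isd_eq. apply isdR_plus; apply isdR_mult; [exact D1|exact D1|exact D2|exact D2]. ring. }
    assert (Q : is_derive (fun s => n1 s * n1 s + n2 s * n2 s) t 0).
    { apply is_derive_ext_loc with (fun _ => 1).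
      generalize (HU t Ht). apply filter_imp. intros y Hy. symmetry. apply (Hunit y Hy).
      apply (@is_derive_const R_AbsRing R_NormedModule). }
    apply is_derive_unique in P, Q. rewrite <- P, <- Q. reflexivity. }
  assert (Un : n1 t * n1 t + n2 t * n2 t = 1) by (apply (Hunit t Ht)).
  rewrite ell_eq. fold n1 n2. change (fst (nu t)) with (n1 t). change (snd (nu t)) with (n2 t).
  apply alg1; auto. lra.
Qed.

Lemma gamma_deriv t : U t -> Derive (fun s => fst (gamma s)) t = beta0 gamma nu t * - snd (nu t) /\
                          Derive (fun s => snd (gamma s)) t = beta0 gamma nu t * fst (nu t).
Proof.
  intros Ht. destruct HL as [Hg1 [Hg2 [Hn1 [Hn2 [Hunit [Horth _]]]]]].
  assert (Un : fst (nu t) * fst (nu t) + snd (nu t) * snd (nu t) = 1) by (apply (Hunit t Ht)).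
  assert (O : Derive (fun s => fst (gamma s)) t * fst (nu t) + Derive (fun s => snd (gamma s)) t * snd (nu t) = 0) by (apply (Horth t Ht)).
  rewrite beta0_eq. apply alg1; auto. lra.
Qed.

Lemma Mpow_deriv k t : U t ->
  is_derive (fun s => fst (Mpow k (nu s))) t (ell nu t * fst (Mpow (S k) (nu t))) /\
  is_derive (fun s => snd (Mpow k (nu s))) t (ell nu t * snd (Mpow (S k) (nu t))).
Proof.
  intros Ht. destruct HL as [Hg1 [Hg2 [Hn1 [Hn2 _]]]].
  induction k.
  - destruct (nu_deriv t Ht) as [E1 E2]. simpl. split.
    + eapply isd_eq. apply Derive_correct. apply sm_ex_derive with U; [assumption|exact Ht]. rewrite E1. reflexivity.
    + eapply isd_eq. apply Derive_correct. apply sm_ex_derive with U; [assumption|exact Ht]. rewrite E2. reflexivity.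
  - destruct IHk as [I1 I2]. simpl. split.
    + eapply isd_eq. apply isdR_opp. exact I2. simpl. ring.
    + eapply isd_eq. exact I1. simpl. ring.
Qed.

Lemma Ev_deriv k t : U t ->
  is_derive (fun s => fst (Ev gamma nu k s)) t (betak gamma nu k t * fst (Mpow (S k) (nu t))) /\
  is_derive (fun s => snd (Ev gamma nu k s)) t (betak gamma nu k t * snd (Mpow (S k) (nu t))).
Proof.
  intros Ht. destruct HL as [Hg1 [Hg2 [Hn1 [Hn2 _]]]].
  induction k.
  - destruct (gamma_deriv t Ht) as [E1 E2]. simpl. split.
    + eapply isd_eq. apply Derive_correct. apply sm_ex_derive with U; [assumption|exact Ht]. rewrite E1. reflexivity.
    + eapply isd_eq. apply Derive_correct. apply sm_ex_derive with U; [assumption|exact Ht]. rewrite E2. reflexivity.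
  - destruct IHk as [I1 I2]. destruct (Mpow_deriv k t Ht) as [M1 M2].
    set (q := fun s => betak gamma nu k s / ell nu s).
    assert (Q : is_derive q t (betak gamma nu (S k) t)).
    { apply Derive_correct. apply sm_ex_derive with U; [|exact Ht].
      apply sm_ext with (fun s => betak gamma nu k s * (fun s => / ell nu s) s). exact HU. intros; reflexivity.
      apply sm_mult. exact HU. apply sm_betak. apply sm_inv. exact HU. exact Hell. apply sm_ell. }
    assert (El : ell nu t <> 0) by (apply Hell; exact Ht).
    simpl. split.
    + eapply isd_eq. apply isdR_minus. exact I1. apply isdR_mult. exact Q. exact M1.
      unfold q. simpl. field. exact El.
    + eapply isd_eq. apply isdR_minus. exact I2. apply isdR_mult. exact Q. exact M2.
      unfold q. simpl. field. exact El.
Qed.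

End E.
Lemma sq_open p d x y : sq p d (x, y) -> locally_2d (fun u v => sq p d (u, v)) x y.
Proof.
  unfold sq; simpl. intros [H1 H2].
  assert (Hp : 0 < Rmin (d - Rabs (x - fst p)) (d - Rabs (y - snd p))) by (apply Rmin_pos; lra).
  exists (mkposreal _ Hp). simpl. intros u v Hu Hv.
  generalize (Rmin_l (d - Rabs (x - fst p)) (d - Rabs (y - snd p))) (Rmin_r (d - Rabs (x - fst p)) (d - Rabs (y - snd p))). intros.
  split.
  - replace (u - fst p) with ((u - x) + (x - fst p)) by ring.
    eapply Rle_lt_trans. apply Rabs_triang. lra.
  - replace (v - snd p) with ((v - y) + (y - snd p)) by ring.
    eapply Rle_lt_trans. apply Rabs_triang. lra.
Qed.

Lemma chain2 (F : R * R -> R) (p : R * R) (d : R) :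
  Ck2 1 F (sq p d) -> forall x y, sq p d (x, y) ->
  forall (c1 c2 : R -> R) (t0 v1 v2 : R), c1 t0 = x -> c2 t0 = y -> is_derive c1 t0 v1 -> is_derive c2 t0 v2 ->
  is_derive (fun t => F (c1 t, c2 t)) t0 (Defs.d1 F (x, y) * v1 + Defs.d2 F (x, y) * v2).
Proof.
  intros [HC [HP [HD1 HD2]]] x y Hq c1 c2 t0 v1 v2 E1 E2 Dc1 Dc2.
  set (f := fun u v => F (u, v)).
  assert (Hdiff : differentiable_pt_lim f x y (Defs.d1 F (x, y)) (Defs.d2 F (x, y))).
  { apply filterdiff_differentiable_pt_lim.
    eapply filterdiff_ext_lin.
    apply (is_derive_filterdiff f x y (fun u v => Defs.d1 F (u, v)) (Defs.d2 F (x, y))).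
    - apply (locally_2d_locally (fun u v => is_derive (fun z => f z v) u (Defs.d1 F (u, v)))).
      generalize (sq_open _ _ _ _ Hq). apply locally_2d_impl. apply locally_2d_forall.
      intros u v Huv. apply Derive_correct. apply (HP (u, v) Huv).
    - apply Derive_correct. apply (HP (x, y) Hq).
    - apply continuous_ext with (Defs.d1 F). intros [u v]; reflexivity. apply (HD1 (x, y) Hq).
    - intros [u v]. simpl. reflexivity. }
  apply is_derive_Reals. apply (derivable_pt_lim_comp_2d f c1 c2 t0 _ _ v1 v2).
  rewrite E1, E2. exact Hdiff.
  apply is_derive_Reals; auto. apply is_derive_Reals; auto.
Qed.
Lemma abs_le1 x y : x*x + y*y = 1 -> Rabs x <= 1.
Proof. intros H. apply Rabs_le. split; nra. Qed.

Lemma ival_abs d s : ival (-d) d s -> Rabs s < d.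
Proof. unfold ival; intros [H1 H2]. apply Rabs_def1; lra. Qed.
Lemma abs_ival d s : Rabs s < d -> ival (-d) d s.
Proof. intros H. apply Rabs_def2 in H. unfold ival; lra. Qed.

Lemma pow_div x y k : y <> 0 -> (x / y) ^ k = x ^ k / y ^ k.
Proof. intros Hy. induction k; simpl. field. rewrite IHk. field. split; auto. apply pow_nonzero; auto. Qed.

Lemma limR_pow (f : R -> R) (x l : R) k : is_lim f x l -> is_lim (fun t => f t ^ k) x (l ^ k).
Proof. intros H. induction k; simpl. apply limR_const. apply limR_mult; auto. Qed.

Lemma cont_comp2 (h : R * R -> R) (f g : R -> R) x :
  continuous h (f x, g x) -> continuity_pt f x -> continuity_pt g x -> continuity_pt (fun t => h (f t, g t)) x.
Proof.
  intros Hh Hf Hg. apply continuity_pt_filterlim.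
  apply (continuous_comp_2 f g (fun u v => h (u, v))).
  apply continuity_pt_filterlim; auto. apply continuity_pt_filterlim; auto.
  apply continuous_ext with h. intros [u v]; reflexivity. exact Hh.
Qed.

Lemma isd_lin x0 m s : is_derive (fun s => x0 + s * m) s m.
Proof.
  eapply isd_eq. apply isdR_plus. apply (@is_derive_const R_AbsRing R_NormedModule).
  apply isdR_mult. apply (@is_derive_id R_AbsRing). apply (@is_derive_const R_AbsRing R_NormedModule).
  simpl. unfold zero, one; simpl. ring.
Qed.

Lemma contA (F : R * R -> R) p d (g1 g2 n1 n2 : R -> R) :
  Ck2 1 F (sq p d) -> sq p d (g1 0, g2 0) -> continuity_pt g1 0 -> continuity_pt g2 0 ->
  continuity_pt n1 0 -> continuity_pt n2 0 ->
  continuity_pt (fun t => Defs.d1 F (g1 t, g2 t) * - n2 t + Defs.d2 F (g1 t, g2 t) * n1 t) 0.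
Proof.
  intros [_ [_ [K1 K2]]] Hs C1 C2 C3 C4.
  apply continuity_pt_plus; apply continuity_pt_mult.
  apply cont_comp2; [apply K1; exact Hs|exact C1|exact C2].
  apply continuity_pt_opp; exact C4.
  apply cont_comp2; [apply K2; exact Hs|exact C1|exact C2].
  exact C3.
Qed.

Lemma base (n : nat) (a b : R) (gamma nu : R -> R * R) :
  (2 <= n)%nat -> a < 0 < b -> legendre_immersion a b gamma nu ->
  A_equivalent_at0 a b gamma (Cusp n) ->
  exists c, c <> 0 /\ is_lim (fun t => beta0 gamma nu t / t ^ (n - 1)) 0 c.
Proof.
  intros Hn Hab HL HA.
  destruct HA as [d [phi [phiinv [psi [chi [Hd [Hphi0 [Hsphi [Hsphiinv [Hinv1 [Hinv2 [Hpsi0 [Hspsi [Hschi [Hcp [Hpc Heq]]]]]]]]]]]]]]]].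
  pose proof HL as HL'. destruct HL' as [Hg1 [Hg2 [Hn1 [Hn2 [Hunit [Horth _]]]]]].
  set (g1 := fun s => fst (gamma s)). set (g2 := fun s => snd (gamma s)).
  set (n1 := fun s => fst (nu s)). set (n2 := fun s => snd (nu s)).
  set (psi1 := fun p => fst (psi p)). set (psi2 := fun p => snd (psi p)).
  set (chi1 := fun p => fst (chi p)). set (chi2 := fun p => snd (chi p)).
  destruct Hspsi as [Hp1 Hp2]. destruct Hschi as [Hc1 Hc2].
  assert (Kp1 : Ck2 1 psi1 (sq (gamma 0) d)) by apply Hp1.
  assert (Kp2 : Ck2 1 psi2 (sq (gamma 0) d)) by apply Hp2.
  assert (Kc1 : Ck2 1 chi1 (sq (Cusp n 0) d)) by apply Hc1.
  assert (Kc2 : Ck2 1 chi2 (sq (Cusp n 0) d)) by apply Hc2.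
  assert (H0 : ival a b 0) by (unfold ival; lra).
  assert (Hd0 : ival (-d) d 0) by (unfold ival; lra).
  set (x0 := g1 0). set (y0 := g2 0).
  assert (Hp0 : gamma 0 = (x0, y0)) by (unfold x0, y0, g1, g2; apply surjective_pairing).
  assert (Hun0 : n1 0 * n1 0 + n2 0 * n2 0 = 1) by (apply (Hunit 0 H0)).
  assert (Hphid : forall t, ival (-d) d t -> is_derive phi t (Derive phi t)).
  { intros t Ht. apply Derive_correct. apply (sm_ex_derive _ _ _ Hsphi Ht). }
  set (D := Derive phi 0).
  assert (HD : D <> 0).
  { assert (P : is_derive (fun t => phiinv (phi t)) 0 (Derive phi 0 * Derive phiinv (phi 0))).
    { eapply isd_eq. apply (is_derive_comp phiinv phi 0). apply Derive_correct. rewrite Hphi0.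
      apply (sm_ex_derive _ _ _ Hsphiinv Hd0). apply Hphid; auto. reflexivity. }
    assert (Q : is_derive (fun t => phiinv (phi t)) 0 1).
    { apply is_derive_ext_loc with (fun t => t). generalize (ival_open _ _ 0 Hd0). apply filter_imp.
      intros; symmetry; auto. apply (@is_derive_id R_AbsRing). }
    apply is_derive_unique in P, Q. intros E. unfold D in E. rewrite E, Rmult_0_l in P.
    rewrite P in Q. lra. }
  set (A1 := fun t => Defs.d1 psi1 (g1 t, g2 t) * - n2 t + Defs.d2 psi1 (g1 t, g2 t) * n1 t).
  set (A2 := fun t => Defs.d1 psi2 (g1 t, g2 t) * - n2 t + Defs.d2 psi2 (g1 t, g2 t) * n1 t).
  assert (HA0 : A1 0 <> 0 \/ A2 0 <> 0).
  { destruct (Req_dec (A1 0) 0) as [Z1|Z1]; [|left; auto].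
    destruct (Req_dec (A2 0) 0) as [Z2|Z2]; [|right; auto].
    exfalso.
    set (m1 := - n2 0). set (m2 := n1 0).
    set (c1 := fun s => x0 + s * m1). set (c2 := fun s => y0 + s * m2).
    assert (Hm1 : Rabs m1 <= 1). { unfold m1. rewrite Rabs_Ropp. apply (abs_le1 _ (n1 0)). lra. }
    assert (Hm2 : Rabs m2 <= 1). { unfold m2. apply (abs_le1 _ (n2 0)). lra. }
    assert (Hsq : forall s, Rabs s < d -> sq (gamma 0) d (c1 s, c2 s)).
    { intros s Hs. rewrite Hp0. unfold sq, c1, c2; simpl.
      replace (x0 + s * m1 - x0) with (s * m1) by ring. replace (y0 + s * m2 - y0) with (s * m2) by ring.
      rewrite !Rabs_mult. split.
      apply Rle_lt_trans with (Rabs s * 1). apply Rmult_le_compat_l; auto. apply Rabs_pos. lra.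
      apply Rle_lt_trans with (Rabs s * 1). apply Rmult_le_compat_l; auto. apply Rabs_pos. lra. }
    assert (Hsq0 : sq (gamma 0) d (x0, y0)).
    { rewrite Hp0. unfold sq; simpl. rewrite !Rminus_diag_eq, Rabs_R0 by reflexivity. lra. }
    set (w1 := fun s => psi1 (c1 s, c2 s)). set (w2 := fun s => psi2 (c1 s, c2 s)).
    assert (Dw1 : is_derive w1 0 (A1 0)).
    { eapply isd_eq. apply (chain2 psi1 (gamma 0) d Kp1 x0 y0 Hsq0 c1 c2 0 m1 m2).
      unfold c1; ring. unfold c2; ring. apply isd_lin. apply isd_lin. reflexivity. }
    assert (Dw2 : is_derive w2 0 (A2 0)).
    { eapply isd_eq. apply (chain2 psi2 (gamma 0) d Kp2 x0 y0 Hsq0 c1 c2 0 m1 m2).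
      unfold c1; ring. unfold c2; ring. apply isd_lin. apply isd_lin. reflexivity. }
    assert (Ew : (w1 0, w2 0) = Cusp n 0).
    { unfold w1, w2, psi1, psi2. replace (c1 0, c2 0) with (gamma 0).
      rewrite <- surjective_pairing. exact Hpsi0.
      rewrite Hp0. unfold c1, c2. f_equal; ring. }
    assert (Hsqw : sq (Cusp n 0) d (w1 0, w2 0)).
    { rewrite Ew. unfold sq. rewrite !Rminus_diag_eq, Rabs_R0 by reflexivity. lra. }
    assert (Hloc : locally 0 (fun s => Rabs s < d)).
    { generalize (ival_open _ _ 0 Hd0). apply filter_imp. apply ival_abs. }
    assert (Hback : forall s, Rabs s < d -> chi (psi (c1 s, c2 s)) = (c1 s, c2 s)).
    { intros s Hs. apply Hcp. apply Hsq; auto. }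
    assert (K1 : is_derive (fun s => chi1 (w1 s, w2 s)) 0 m1).
    { apply is_derive_ext_loc with c1.
      generalize Hloc. apply filter_imp. intros s Hs. unfold chi1, w1, w2, psi1, psi2.
      rewrite <- surjective_pairing, Hback; auto.
      apply isd_lin. }
    assert (K2 : is_derive (fun s => chi2 (w1 s, w2 s)) 0 m2).
    { apply is_derive_ext_loc with c2.
      generalize Hloc. apply filter_imp. intros s Hs. unfold chi2, w1, w2, psi1, psi2.
      rewrite <- surjective_pairing, Hback; auto.
      apply isd_lin. }
    assert (L1 := chain2 chi1 (Cusp n 0) d Kc1 (w1 0) (w2 0) Hsqw w1 w2 0 (A1 0) (A2 0) eq_refl eq_refl Dw1 Dw2).
    assert (L2 := chain2 chi2 (Cusp n 0) d Kc2 (w1 0) (w2 0) Hsqw w1 w2 0 (A1 0) (A2 0) eq_refl eq_refl Dw1 Dw2).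
    apply is_derive_unique in K1, K2, L1, L2.
    rewrite K1, Z1, Z2 in L1. rewrite K2, Z1, Z2 in L2.
    assert (m1 = 0) by lra. assert (m2 = 0) by lra.
    unfold m1, m2 in *. nra. }
  assert (Hcg1 : continuity_pt g1 0) by (apply sm_cont with (ival a b); auto).
  assert (Hcg2 : continuity_pt g2 0) by (apply sm_cont with (ival a b); auto).
  assert (Hcn1 : continuity_pt n1 0) by (apply sm_cont with (ival a b); auto).
  assert (Hcn2 : continuity_pt n2 0) by (apply sm_cont with (ival a b); auto).
  assert (Hsq0 : sq (gamma 0) d (g1 0, g2 0)).
  { rewrite Hp0. unfold sq; simpl. rewrite !Rminus_diag_eq, Rabs_R0 by reflexivity. lra. }
  assert (Hloc0 : locally 0 (fun t => ival a b t /\ Rabs t < d /\ sq (gamma 0) d (g1 t, g2 t))).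
  { apply filter_and. apply ival_open; auto.
    apply filter_and. generalize (ival_open _ _ 0 Hd0). apply filter_imp. apply ival_abs.
    pose proof (proj1 (continuity_pt_filterlim _ _) Hcg1) as F1.
    pose proof (proj1 (continuity_pt_filterlim _ _) Hcg2) as F2.
    assert (B1 : locally 0 (fun t => Rabs (g1 t - x0) < d)).
    { apply (F1 (fun y => Rabs (y - x0) < d)). exists (mkposreal d Hd). intros y Hy. exact Hy. }
    assert (B2 : locally 0 (fun t => Rabs (g2 t - y0) < d)).
    { apply (F2 (fun y => Rabs (y - y0) < d)). exists (mkposreal d Hd). intros y Hy. exact Hy. }
    generalize (filter_and _ _ B1 B2). apply filter_imp. intros t [T1 T2].
    rewrite Hp0. unfold sq; simpl. auto. }
  destruct Hloc0 as [e0 He0].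
  assert (HP : forall t, Rabs t < e0 -> ival a b t /\ Rabs t < d /\ sq (gamma 0) d (g1 t, g2 t)).
  { intros t Ht. apply He0. change (Rabs (t - 0) < e0). rewrite Rminus_0_r; auto. }
  set (N := pred n).
  assert (HnN : n = S N) by (unfold N; lia).
  assert (HE : forall t, Rabs t < e0 ->
     beta0 gamma nu t * A1 t = INR n * Derive phi t * phi t ^ N /\
     beta0 gamma nu t * A2 t = INR (S n) * Derive phi t * phi t ^ n).
  { intros t Ht. destruct (HP t Ht) as [Hta [Htd Hts]].
    assert (Hloct : locally t (fun s => Rabs s < e0)).
    { generalize (ival_open (-e0) e0 t (abs_ival _ _ Ht)). apply filter_imp. apply ival_abs. }
    assert (Dg1 : is_derive g1 t (Derive g1 t)) by (apply Derive_correct; apply (sm_ex_derive _ _ _ Hg1 Hta)).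
    assert (Dg2 : is_derive g2 t (Derive g2 t)) by (apply Derive_correct; apply (sm_ex_derive _ _ _ Hg2 Hta)).
    destruct (gamma_deriv a b gamma nu HL t Hta) as [G1 G2].
    assert (Eloc : forall s, Rabs s < e0 -> psi (g1 s, g2 s) = Cusp n (phi s)).
    { intros s Hs. destruct (HP s Hs) as [Hs1 [Hs2 _]]. unfold g1, g2. rewrite <- surjective_pairing.
      apply Heq; auto. apply abs_ival; auto. }
    assert (Hpd := Hphid t (abs_ival _ _ Htd)).
    split.
    - assert (P1 := chain2 psi1 (gamma 0) d Kp1 (g1 t) (g2 t) Hts g1 g2 t _ _ eq_refl eq_refl Dg1 Dg2).
      assert (P2 : is_derive (fun s => psi1 (g1 s, g2 s)) t (INR n * Derive phi t * phi t ^ N)).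
      { apply is_derive_ext_loc with (fun s => phi s ^ n).
        generalize Hloct; apply filter_imp. intros s Hs. unfold psi1. rewrite Eloc; auto.
        eapply isd_eq. apply is_derive_pow. exact Hpd. unfold N. ring. }
      apply is_derive_unique in P1, P2. rewrite <- P2, P1. unfold A1.
      change (Derive g1 t) with (Derive (fun s => fst (gamma s)) t).
      change (Derive g2 t) with (Derive (fun s => snd (gamma s)) t). rewrite G1, G2. unfold n1, n2. ring.
    - assert (P1 := chain2 psi2 (gamma 0) d Kp2 (g1 t) (g2 t) Hts g1 g2 t _ _ eq_refl eq_refl Dg1 Dg2).
      assert (P2 : is_derive (fun s => psi2 (g1 s, g2 s)) t (INR (S n) * Derive phi t * phi t ^ n)).
      { apply is_derive_ext_loc with (fun s => phi s ^ (S n)).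
        generalize Hloct; apply filter_imp. intros s Hs. unfold psi2. rewrite Eloc; auto.
        eapply isd_eq. apply is_derive_pow. exact Hpd. simpl pred. ring. }
      apply is_derive_unique in P1, P2. rewrite <- P2, P1. unfold A2.
      change (Derive g1 t) with (Derive (fun s => fst (gamma s)) t).
      change (Derive g2 t) with (Derive (fun s => snd (gamma s)) t). rewrite G1, G2. unfold n1, n2. ring. }
  replace (n - 1)%nat with N by (unfold N; lia).
  assert (He0p : 0 < e0) by apply cond_pos.
  assert (LQ : is_lim (fun t => phi t / t) 0 D).
  { apply lim0_intro. intros eps Heps.
    assert (Hd' := Hphid 0 Hd0). apply is_derive_Reals in Hd'.
    destruct (Hd' eps Heps) as [del Hdel]. exists del. split. apply cond_pos.
    intros t Ht0 Ht. specialize (Hdel t Ht0 Ht). rewrite Rplus_0_l, Hphi0, Rminus_0_r in Hdel. exact Hdel. }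
  assert (LDp : is_lim (Derive phi) 0 D).
  { apply lim_cont. apply continuity_pt_filterlim.
    apply (@ex_derive_continuous R_AbsRing R_NormedModule). exact (Hsphi 1%nat 0 Hd0). }
  assert (Lphi : is_lim phi 0 0).
  { rewrite <- Hphi0 at 2. apply lim_cont. apply sm_cont with (ival (-d) d); auto. }
  assert (LA1 : is_lim A1 0 (A1 0)).
  { apply lim_cont. apply (contA psi1 (gamma 0) d g1 g2 n1 n2 Kp1 Hsq0); auto. }
  assert (LA2 : is_lim A2 0 (A2 0)).
  { apply lim_cont. apply (contA psi2 (gamma 0) d g1 g2 n1 n2 Kp2 Hsq0); auto. }
  set (X1 := fun t => INR n * Derive phi t * (phi t / t) ^ N).
  set (X2 := fun t => INR (S n) * Derive phi t * (phi t / t) ^ N * phi t).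
  set (L1 := INR n * D * D ^ N). set (L2 := INR (S n) * D * D ^ N * 0).
  assert (LX1 : is_lim X1 0 L1).
  { apply limR_mult. apply limR_mult. apply limR_const. exact LDp. apply limR_pow; exact LQ. }
  assert (LX2 : is_lim X2 0 L2).
  { apply limR_mult; auto. apply limR_mult. apply limR_mult. apply limR_const. exact LDp. apply limR_pow; exact LQ. }
  set (B := fun t => beta0 gamma nu t / t ^ N).
  assert (HB : forall t, t <> 0 -> Rabs t < e0 -> B t * A1 t = X1 t /\ B t * A2 t = X2 t).
  { intros t Ht0 Ht. destruct (HE t Ht) as [E1 E2].
    assert (t ^ N <> 0) by (apply pow_nonzero; auto).
    unfold B, X1, X2. rewrite pow_div by auto. split.
    - unfold Rdiv. rewrite Rmult_assoc, (Rmult_comm (/ _)), <- Rmult_assoc, E1. ring.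
    - assert (Hpn : phi t ^ n = phi t ^ N * phi t) by (rewrite HnN; simpl; ring).
      unfold Rdiv. rewrite Rmult_assoc, (Rmult_comm (/ _)), <- Rmult_assoc, E2, Hpn. ring. }
  set (Sf := fun t => A1 t * A1 t + A2 t * A2 t).
  set (S0 := A1 0 * A1 0 + A2 0 * A2 0).
  assert (HS0 : 0 < S0).
  { unfold S0. destruct HA0 as [Z|Z].
    assert (0 < A1 0 * A1 0) by (apply Rsqr_pos_lt; auto). nra.
    assert (0 < A2 0 * A2 0) by (apply Rsqr_pos_lt; auto). nra. }
  assert (LS : is_lim Sf 0 S0) by (apply limR_plus; apply limR_mult; auto).
  destruct (lim0_elim _ _ LS (S0 / 2)) as [d1 [Hd1 HS1]]. lra.
  set (c := (L1 * A1 0 + L2 * A2 0) * / S0).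
  assert (LB : is_lim B 0 c).
  { apply (lim_ext0 (fun t => (X1 t * A1 t + X2 t * A2 t) * / Sf t) _ _ (Rmin e0 d1)).
    apply Rmin_pos; auto.
    intros t Ht0 Ht.
    assert (Ht1 : Rabs t < e0) by (generalize (Rmin_l e0 d1); lra).
    assert (Ht2 : Rabs t < d1) by (generalize (Rmin_r e0 d1); lra).
    specialize (HS1 t Ht0 Ht2). apply Rabs_def2 in HS1.
    assert (Sf t <> 0) by lra.
    destruct (HB t Ht0 Ht1) as [E1 E2]. rewrite <- E1, <- E2. unfold Sf in *. field. auto.
    apply limR_mult. apply limR_plus; apply limR_mult; auto. apply limR_inv; auto. lra. }
  exists c. split; auto.
  assert (LBA : is_lim (fun t => B t * A1 t) 0 (c * A1 0)) by (apply limR_mult; auto).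
  assert (LBA' : is_lim (fun t => B t * A1 t) 0 L1).
  { apply (lim_ext0 X1 _ _ e0); auto. intros t Ht0 Ht. symmetry. apply (HB t Ht0 Ht). }
  assert (EL := limR_unique _ _ _ _ LBA LBA').
  assert (HL1 : L1 <> 0).
  { unfold L1. apply Rmult_integral_contrapositive_currified. apply Rmult_integral_contrapositive_currified; auto.
    apply not_0_INR; lia. apply pow_nonzero; auto. }
  intros Hc. rewrite Hc, Rmult_0_l in EL. auto.
Qed.

Lemma Mpow_norm k v : fst (Mpow k v) * fst (Mpow k v) + snd (Mpow k v) * snd (Mpow k v) = fst v * fst v + snd v * snd v.
Proof. induction k; simpl. reflexivity. rewrite <- IHk. ring. Qed.

Theorem mainTheorem3 (n : nat) (a b : R) (gamma nu : R -> R * R) :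
  (2 <= n)%nat ->
  a < 0 < b ->
  legendre_immersion a b gamma nu ->
  (forall t, ival a b t -> ell nu t <> 0) ->
  A_equivalent_at0 a b gamma (Cusp n) ->
  (forall k : nat, (1 <= k <= n - 2)%nat -> singular_point (Ev gamma nu k) 0) /\
  regular_point (Ev gamma nu (n - 1)) 0.
Proof.
  intros Hn Hab HL Hell HA.
  destruct (base n a b gamma nu Hn Hab HL HA) as [c0 [Hc0 L0]].
  assert (H0 : ival a b 0) by (unfold ival; lra).
  assert (K : forall k, (k <= n - 1)%nat -> exists c, c <> 0 /\ is_lim (fun t => betak gamma nu k t / t ^ (n - 1 - k)) 0 c).
  { induction k; intros Hk.
    - exists c0. split; auto. rewrite Nat.sub_0_r. exact L0.
    - destruct IHk as [c [Hc Lc]]. lia.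
      replace (n - 1 - k)%nat with (S (n - 1 - S k)) in Lc by lia.
      destruct (step a b Hab (n - 1 - S k) c (betak gamma nu k) (ell nu) (sm_betak a b gamma nu HL Hell k) (sm_ell a b gamma nu HL) Hell Hc Lc) as [_ [c' [Hc' Lc']]].
      exists c'. split; auto. }
  assert (Dev : forall k, dcurve (Ev gamma nu k) 0 = (betak gamma nu k 0 * fst (Mpow (S k) (nu 0)), betak gamma nu k 0 * snd (Mpow (S k) (nu 0)))).
  { intros k. destruct (Ev_deriv a b gamma nu HL Hell k 0 H0) as [E1 E2].
    unfold dcurve. apply is_derive_unique in E1, E2. f_equal; [exact E1|exact E2]. }
  split.
  - intros k Hk. destruct (K k ltac:(lia)) as [c [Hc Lc]].
    replace (n - 1 - k)%nat with (S (n - 2 - k)) in Lc by lia.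
    destruct (T1 a b Hab _ c _ (sm_betak a b gamma nu HL Hell k) Lc) as [Z _].
    assert (Z0 : betak gamma nu k 0 = 0) by (apply (Z 0%nat); lia).
    unfold singular_point. rewrite Dev, Z0. f_equal; ring.
  - destruct (K (n - 1)%nat ltac:(lia)) as [c [Hc Lc]].
    replace (n - 1 - (n - 1))%nat with 0%nat in Lc by lia.
    destruct (T1 a b Hab _ c _ (sm_betak a b gamma nu HL Hell (n - 1)) Lc) as [_ Z].
    simpl in Z. rewrite Rmult_1_r in Z.
    unfold regular_point. rewrite Dev, Z. intros E. injection E. intros E2 E1.
    destruct HL as [_ [_ [_ [_ [Hunit _]]]]].
    assert (U := Hunit 0 H0). unfold dot in U. rewrite <- (Mpow_norm (S (n - 1))) in U.
    apply Rmult_integral in E1, E2. destruct E1, E2; try contradiction. simpl in U. nra.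
Qed.
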